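(* Let $\mathbf a:\mathbb R^D\to\mathcal H$ define a CMF dictionary with kernel $\kappa$, $D\ge1$. Let $\mathcal S^\star=\{\theta^\star_1,\theta^\star_2\}$ with $\theta^\star_1\ne\theta^\star_2$, let $\mathbf G\in\mathbb R^{2\times2}$, $\mathbf G[\ell,\ell']=\kappa(\theta^\star_\ell,\theta^\star_{\ell'})$, and $\mathbf g_\theta\in\mathbb R^2$, $\mathbf g_\theta[\ell]=\kappa(\theta,\theta^\star_\ell)$. If $\|\mathbf G^{-1}\mathbf g_\theta\|_1<1$ for every $\theta\in\mathrm{Cart}(\mathcal S^\star)\setminus\mathcal S^\star$, then OMP achieves exact $2$-step recovery of $\mathcal S^\star$.
   Context: CMF: $\varphi:[0,\infty)\to\mathbb R$ infinitely differentiable on $(0,\infty)$, right-continuous at $0$, $(-1)^n\varphi^{(n)}(x)\ge0$ for $x>0$, $n\ge0$. A CMF dictionary in dimension $D$ is $\mathbf a:\mathbb R^D\to\mathcal H$ ($\mathcal H$ real Hilbert) with $\kappa(\theta,\theta')=\langle\mathbf a(\theta),\mathbf a(\theta')\rangle=\varphi(\|\theta-\theta'\|_p^p)$, $\varphi$ a CMF, $\varphi(0)=1$, $\lim_{x\to\infty}\varphi(x)=0$, $0<p\le1$. $\mathrm{Cart}(\mathcal S)=\prod_{d=1}^D\{\theta[d]:\theta\in\mathcal S\}$. OMP with input $\mathbf y$: $\mathbf r=\mathbf y$, $\widehat{\mathcal S}=\emptyset$; while $\mathbf r\ne0$: choose any $\widehat\theta_t\in\arg\max_\theta|\langle\mathbf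 a(\theta),\mathbf r\rangle|$, add it to $\widehat{\mathcal S}$, set $\mathbf r$ to $\mathbf y$ minus its orthogonal projection onto $\mathrm{span}\{\mathbf a(\widehat\theta_1),\dots,\mathbf a(\widehat\theta_t)\}$. A reachable support is any final $\widehat{\mathcal S}$ obtainable through some choices of maximizers. Exact $2$-step recovery of $\mathcal S^\star$: for all nonzero $c_1,c_2$, every reachable support of OMP with input $c_1\mathbf a(\theta^\star_1)+c_2\mathbf a(\theta^\star_2)$ equals $\mathcal S^\star$. *)

(* Defs.v *)
From Stdlib Require Vectors.Fin.
From Stdlib Require Import Reals Lra List.
Open Scope R_scope.

Record RHilbert := {
  hcar :> Type;
  hzero : hcar;
  hadd : hcar -> hcar -> hcar;
  hopp : hcar -> hcar;
  hscal : R -> hcar -> hcar;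
  hinner : hcar -> hcar -> R;
  haddA : forall u v w, hadd u (hadd v w) = hadd (hadd u v) w;
  haddC : forall u v, hadd u v = hadd v u;
  hadd0 : forall u, hadd u hzero = u;
  haddN : forall u, hadd u (hopp u) = hzero;
  hscalA : forall a b u, hscal a (hscal b u) = hscal (a * b) u;
  hscal1 : forall u, hscal 1 u = u;
  hscalDr : forall a u v, hscal a (hadd u v) = hadd (hscal a u) (hscal a v);
  hscalDl : forall a b u, hscal (a + b) u = hadd (hscal a u) (hscal b u);
  hinner_sym : forall u v, hinner u v = hinner v u;
  hinner_addl : forall u v w, hinner (hadd u v) w = hinner u w + hinner v w;
  hinner_scall : forall a u v, hinner (hscal a u) v = a * hinner u v;
  hinner_pos : forall u, 0 <= hinner u u;
  hinner_def : forall u, hinner u u = 0 -> u = hzero;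
  hcomplete : forall s : nat -> hcar,
    (forall eps, eps > 0 -> exists N, forall m n, (N <= m)%nat -> (N <= n)%nat ->
        sqrt (hinner (hadd (s m) (hopp (s n))) (hadd (s m) (hopp (s n)))) < eps) ->
    exists l, forall eps, eps > 0 -> exists N, forall n, (N <= n)%nat ->
        sqrt (hinner (hadd (s n) (hopp l)) (hadd (s n) (hopp l))) < eps
}.

Arguments hzero {_}. Arguments hadd {_}. Arguments hopp {_}.
Arguments hscal {_}. Arguments hinner {_}.

Definition hsub {H : RHilbert} (u v : H) : H := hadd u (hopp v).

Definition CMF (phi : R -> R) : Prop :=
  (forall eps, eps > 0 -> exists delta, delta > 0 /\
      forall x, 0 <= x < delta -> Rabs (phi x - phi 0) < eps) /\
  (* phi is C^oo on (0,oo), with derivatives d n, and (-1)^n d n >= 0 there *)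
  exists d : nat -> R -> R,
    (forall x, 0 <= x -> d 0%nat x = phi x) /\
    (forall n x, 0 < x -> derivable_pt_lim (d n) x (d (S n) x)) /\
    (forall n x, 0 < x -> 0 <= (-1) ^ n * d n x).

Definition vecR (D : nat) := Fin.t D -> R.

Fixpoint fsum (n : nat) : (Fin.t n -> R) -> R :=
  match n with
  | O => fun _ => 0
  | S m => fun f => f Fin.F1 + fsum m (fun i => f (Fin.FS i))
  end.

(* |x|^p, with the convention 0^p = 0 (p > 0) *)
Definition abspow (x p : R) : R :=
  if Req_EM_T x 0 then 0 else Rpower (Rabs x) p.

Definition lpp {D : nat} (p : R) (t t' : vecR D) : R :=
  fsum D (fun i => abspow (t i - t' i) p).

Definition kernel {D : nat} (phi : R -> R) (p : R) (t t' : vecR D) : R :=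
  phi (lpp p t t').

Definition CMF_dictionary {D : nat} {H : RHilbert} (a : vecR D -> H)
    (phi : R -> R) (p : R) : Prop :=
  CMF phi /\ phi 0 = 1 /\
  (forall eps, eps > 0 -> exists M, forall x, x > M -> Rabs (phi x) < eps) /\
  0 < p <= 1 /\
  forall t t', hinner (a t) (a t') = kernel phi p t t'.

(** Cartesian product of a two-point set *)
Definition in_Cart2 {D : nat} (t1 t2 t : vecR D) : Prop :=
  forall i, t i = t1 i \/ t i = t2 i.

Definition mat2 := ((R * R) * (R * R))%type.  (* ((m11,m12),(m21,m22)) *)
Definition det2 (m : mat2) : R :=
  let '((a, b), (c, d)) := m in a * d - b * c.
Definition inv2 (m : mat2) : mat2 :=
  let '((a, b), (c, d)) := m in
  ((d / det2 m, - b / det2 m), (- c / det2 m, a / det2 m)).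
Definition mulv2 (m : mat2) (v : R * R) : R * R :=
  let '((a, b), (c, d)) := m in let '(x, y) := v in (a * x + b * y, c * x + d * y).
Definition norm1_2 (v : R * R) : R := Rabs (fst v) + Rabs (snd v).

Inductive in_span {H : RHilbert} : list H -> H -> Prop :=
  | span_nil : in_span nil hzero
  | span_cons : forall L v x c, in_span L v -> in_span (x :: L) (hadd v (hscal c x)).

(* r = y minus the orthogonal projection of y onto span L *)
Definition is_residual {H : RHilbert} (y : H) (L : list H) (r : H) : Prop :=
  (exists v, in_span L v /\ r = hsub y v) /\
  (forall x, In x L -> hinner x r = 0).

Definition is_argmax {D : nat} {H : RHilbert} (a : vecR D -> H) (r : H)
    (t : vecR D) : Prop :=
  forall t', Rabs (hinner (a t') r) <= Rabs (hinner (a t) r).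

(* omp_path a y L : the list L of selected parameters (in order) is obtainable
   by some execution of OMP on input y *)
Inductive omp_path {D : nat} {H : RHilbert} (a : vecR D -> H) (y : H)
    : list (vecR D) -> Prop :=
  | omp_nil : omp_path a y nil
  | omp_step : forall L r t,
      omp_path a y L -> is_residual y (map a L) r -> r <> hzero ->
      is_argmax a r t -> omp_path a y (L ++ t :: nil).

(* A reachable (final) support: an execution that terminated (residual 0) *)
Definition reachable_support {D : nat} {H : RHilbert} (a : vecR D -> H) (y : H)
    (L : list (vecR D)) : Prop :=
  omp_path a y L /\ is_residual y (map a L) hzero.

Definition exact_2step_recovery {D : nat} {H : RHilbert} (a : vecR D -> H)
    (t1 t2 : vecR D) : Prop :=
  forall c1 c2 : R, c1 <> 0 -> c2 <> 0 ->
    forall L, reachable_support a (hadd (hscal c1 (a t1)) (hscal c2 (a t2))) L ->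
      forall t, In t L <-> (t = t1 \/ t = t2).

(* Main.v *)
Require Import Defs.
From Stdlib Require Import Reals List Lra Lia FunctionalExtensionality Classical.
Open Scope R_scope.

Definition Hd (phi : R -> R) (d : nat -> R -> R) : Prop :=
    (forall x, 0 <= x -> d 0%nat x = phi x) /\
    (forall n x, 0 < x -> derivable_pt_lim (d n) x (d (S n) x)) /\
    (forall n x, 0 < x -> 0 <= (-1) ^ n * d n x).

Definition Hrc (phi : R -> R) : Prop := forall eps, eps > 0 -> exists delta, delta > 0 /\
      forall x, 0 <= x < delta -> Rabs (phi x - phi 0) < eps.

Definition Hlim (phi : R -> R) : Prop :=
  forall eps, eps > 0 -> exists M, forall x, x > M -> Rabs (phi x) < eps.

Lemma my_mvt (f f' : R -> R) (a b : R) : a < b ->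
  (forall c, a < c < b -> derivable_pt_lim f c (f' c)) ->
  (forall c, a <= c <= b -> continuity_pt f c) ->
  exists c, a < c < b /\ f b - f a = f' c * (b - a).
Proof.
  intros Hab Hd Hc.
  pose (pr1 := fun c (P : a < c < b) => exist (fun l => derivable_pt_lim f c l) (f' c) (Hd c P) : derivable_pt f c).
  pose (pr2 := fun c (P : a < c < b) => derivable_pt_id c).
  destruct (MVT f id a b pr1 pr2 Hab Hc (fun c _ => derivable_continuous_pt _ _ (derivable_pt_id c)))
    as [c [P E]].
  exists c; split; [exact P|].
  rewrite (derive_pt_eq_0 _ _ (f' c) (pr1 c P) (Hd c P)) in E.
  rewrite (derive_pt_eq_0 _ _ 1 (pr2 c P) (derivable_pt_lim_id c)) in E.
  unfold id in E. lra.
Qed.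

Lemma deriv_loc (f g : R -> R) x l del : 0 < del ->
  (forall y, Rabs (y - x) < del -> f y = g y) ->
  derivable_pt_lim f x l -> derivable_pt_lim g x l.
Proof.
  intros Hdel Heq Hf eps Heps.
  destruct (Hf eps Heps) as [dl Hdl].
  assert (Hp : 0 < Rmin dl del) by (apply Rmin_pos; [apply cond_pos| lra]).
  exists (mkposreal _ Hp). intros h Hh Hhl. simpl in Hhl.
  rewrite <- !Heq.
  - apply Hdl; auto. apply Rlt_le_trans with (1 := Hhl); apply Rmin_l.
  - rewrite Rminus_diag, Rabs_R0; lra.
  - replace (x + h - x) with h by ring. apply Rlt_le_trans with (1 := Hhl); apply Rmin_r.
Qed.


Lemma Hd_d1 phi d : Hd phi d -> forall x, 0 < x -> d 1%nat x <= 0.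
Proof. intros [_ [_ H]] x Hx. specialize (H 1%nat x Hx). simpl in H. lra. Qed.
Lemma Hd_d2 phi d : Hd phi d -> forall x, 0 < x -> 0 <= d 2%nat x.
Proof. intros [_ [_ H]] x Hx. specialize (H 2%nat x Hx). simpl in H. lra. Qed.
Lemma Hd_d3 phi d : Hd phi d -> forall x, 0 < x -> d 3%nat x <= 0.
Proof. intros [_ [_ H]] x Hx. specialize (H 3%nat x Hx). simpl in H. lra. Qed.

Lemma Hd_nonneg phi d : Hd phi d -> phi 0 = 1 -> forall x, 0 <= x -> 0 <= phi x.
Proof.
  intros Hd H0 x Hx. destruct (Req_dec x 0) as [->|Hn]; [lra|].
  destruct Hd as [E [_ H]]. specialize (H 0%nat x ltac:(lra)). simpl in H.
  rewrite <- E by lra. lra.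
Qed.

Lemma mvt_pos phi d k u v : Hd phi d -> 0 < u < v ->
  exists c, u < c < v /\ d k v - d k u = d (S k) c * (v - u).
Proof.
  intros [_ [Hder _]] Huv.
  destruct (MVT_cor2 (d k) (d (S k)) u v ltac:(lra)) as [c [E Hc]].
  - intros c Hc. apply Hder. lra.
  - exists c; split; auto.
Qed.

Lemma d1_mono phi d u v : Hd phi d -> 0 < u <= v -> d 1%nat u <= d 1%nat v.
Proof.
  intros Hd Huv. destruct (Req_dec u v) as [->|Hn]; [lra|].
  destruct (mvt_pos phi d 1 u v Hd ltac:(lra)) as [c [Hc E]].
  pose proof (Hd_d2 phi d Hd c ltac:(lra)).
  assert (0 <= d 2%nat c * (v - u)) by (apply Rmult_le_pos; lra). lra.
Qed.

Lemma d2_anti phi d u v : Hd phi d -> 0 < u <= v -> d 2%nat v <= d 2%nat u.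
Proof.
  intros Hd Huv. destruct (Req_dec u v) as [->|Hn]; [lra|].
  destruct (mvt_pos phi d 2 u v Hd ltac:(lra)) as [c [Hc E]].
  pose proof (Hd_d3 phi d Hd c ltac:(lra)).
  assert (d 3%nat c * (v - u) <= 0).
  { assert (0 <= - d 3%nat c * (v - u)) by (apply Rmult_le_pos; lra). lra. }
  lra.
Qed.

Lemma mvt0 phi d u v : Hd phi d -> Hrc phi -> 0 <= u < v ->
  exists c, u < c < v /\ phi v - phi u = d 1%nat c * (v - u).
Proof.
  intros Hd Hr Huv.
  pose (psi := fun x => phi (Rabs x)).
  assert (Hpsi : forall x, 0 <= x -> psi x = phi x).
  { intros x Hx. unfold psi. rewrite Rabs_pos_eq; auto. }
  assert (Hder : forall c, 0 < c -> derivable_pt_lim psi c (d 1%nat c)).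
  { intros c Hc. apply (deriv_loc (d 0%nat) psi c _ c Hc).
    - intros y Hy. destruct Hd as [E _]. rewrite Hpsi, E; auto.
      apply Rabs_def2 in Hy. lra. apply Rabs_def2 in Hy. lra.
    - destruct Hd as [_ [Hd _]]. apply Hd; auto. }
  destruct (my_mvt psi (d 1%nat) u v ltac:(lra)) as [c [Hc E]].
  - intros c Hc. apply Hder. lra.
  - intros c Hc. destruct (Req_dec c 0) as [->|Hn].
    + intros eps Heps. destruct (Hr eps Heps) as [del [Hdel Hdl]].
      exists del; split; [lra|]. intros x [_ Hx]. simpl in *. unfold R_dist in *.
      unfold psi. rewrite Rabs_R0. apply Hdl. split; [apply Rabs_pos|].
      rewrite Rminus_0_r in Hx. auto.
    + apply derivable_continuous_pt. exists (d 1%nat c). apply Hder. lra.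
  - exists c; split; auto. rewrite <- !Hpsi by lra. auto.
Qed.

Lemma phi_noninc phi d u v : Hd phi d -> Hrc phi -> 0 <= u <= v -> phi v <= phi u.
Proof.
  intros Hd Hr Huv. destruct (Req_dec u v) as [->|Hn]; [lra|].
  destruct (mvt0 phi d u v Hd Hr ltac:(lra)) as [c [Hc E]].
  pose proof (Hd_d1 phi d Hd c ltac:(lra)).
  assert (0 <= - d 1%nat c * (v - u)) by (apply Rmult_le_pos; lra). lra.
Qed.

Lemma const_zero phi d xi : Hd phi d -> Hrc phi -> Hlim phi -> 0 < xi -> d 1%nat xi = 0 ->
  forall y, xi <= y -> phi y = 0.
Proof.
  intros Hd Hr Hl Hxi E0.
  assert (Hd1 : forall y, xi <= y -> d 1%nat y = 0).
  { intros y Hy. pose proof (d1_mono phi d xi y Hd ltac:(lra)).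
    pose proof (Hd_d1 phi d Hd y ltac:(lra)). lra. }
  assert (Hc : forall y, xi <= y -> phi y = phi xi).
  { intros y Hy. destruct (Req_dec xi y) as [->|Hn]; auto.
    destruct (mvt0 phi d xi y Hd Hr ltac:(lra)) as [c [Hc E]].
    rewrite Hd1 in E by lra. lra. }
  assert (phi xi = 0).
  { destruct (Req_dec (phi xi) 0) as [|Hn]; auto.
    destruct (Hl (Rabs (phi xi))) as [M HM]. apply Rabs_pos_lt; auto.
    specialize (HM (Rmax M xi + 1)). rewrite Hc in HM.
    - assert (Rmax M xi + 1 > M) by (pose proof (Rmax_l M xi); lra). lra.
    - pose proof (Rmax_r M xi); lra. }
  intros y Hy. rewrite Hc; auto.
Qed.

Lemma d2_zero phi d eta : Hd phi d -> Hrc phi -> phi 0 = 1 -> 0 < eta -> d 2%nat eta = 0 ->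
  d 1%nat eta = 0.
Proof.
  intros Hd Hr H0 Heta E0.
  assert (Hd2 : forall y, eta <= y -> d 2%nat y = 0).
  { intros y Hy. pose proof (d2_anti phi d eta y Hd ltac:(lra)).
    pose proof (Hd_d2 phi d Hd y ltac:(lra)). lra. }
  assert (Hd1 : forall y, eta <= y -> d 1%nat y = d 1%nat eta).
  { intros y Hy. destruct (Req_dec eta y) as [->|Hn]; auto.
    destruct (mvt_pos phi d 1 eta y Hd ltac:(lra)) as [c [Hc E]].
    rewrite Hd2 in E by lra. lra. }
  pose proof (Hd_d1 phi d Hd eta Heta).
  destruct (Req_dec (d 1%nat eta) 0) as [|Hn]; auto. exfalso.
  set (k := d 1%nat eta) in *.
  pose proof (Hd_nonneg phi d Hd H0 eta ltac:(lra)).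
  set (y := eta + (phi eta + 1) / (- k)).
  assert (Hy : eta < y).
  { unfold y. assert (0 < (phi eta + 1) / (- k)) by (apply Rdiv_lt_0_compat; lra). lra. }
  destruct (mvt0 phi d eta y Hd Hr ltac:(lra)) as [c [Hc E]].
  rewrite Hd1 in E by lra. fold k in E.
  assert (phi y = -1).
  { assert (Hyk : k * (y - eta) = - (phi eta + 1)) by (unfold y; field; lra). lra. }
  pose proof (Hd_nonneg phi d Hd H0 y ltac:(lra)). lra.
Qed.
Lemma strict_dec phi d u v : Hd phi d -> Hrc phi -> Hlim phi -> 0 <= u < v -> 0 < phi v -> phi v < phi u.
Proof.
  intros Hd Hr Hl Huv Hv.
  destruct (mvt0 phi d u v Hd Hr Huv) as [c [Hc E]].
  pose proof (Hd_d1 phi d Hd c ltac:(lra)).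
  destruct (Req_dec (d 1%nat c) 0) as [Z|Z].
  - rewrite (const_zero phi d c Hd Hr Hl ltac:(lra) Z v) in Hv by lra. lra.
  - assert (0 < - d 1%nat c * (v - u)) by (apply Rmult_lt_0_compat; lra). lra.
Qed.

Lemma conv_strict phi d u v l : Hd phi d -> Hrc phi -> Hlim phi -> phi 0 = 1 ->
  0 <= u < v -> 0 < l < 1 -> 0 < phi u ->
  phi (l * u + (1 - l) * v) < l * phi u + (1 - l) * phi v.
Proof.
  intros Hd Hr Hl H0 Huv Hlam Hu.
  set (m := l * u + (1 - l) * v).
  assert (Hm1 : m - u = (1 - l) * (v - u)) by (unfold m; ring).
  assert (Hm2 : v - m = l * (v - u)) by (unfold m; ring).
  assert (u < m) by (assert (0 < (1-l)*(v-u)) by (apply Rmult_lt_0_compat; lra); lra).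
  assert (m < v) by (assert (0 < l*(v-u)) by (apply Rmult_lt_0_compat; lra); lra).
  destruct (mvt0 phi d u m Hd Hr ltac:(lra)) as [c1 [Hc1 E1]].
  destruct (mvt0 phi d m v Hd Hr ltac:(lra)) as [c2 [Hc2 E2]].
  destruct (mvt_pos phi d 1 c1 c2 Hd ltac:(lra)) as [eta [Heta E3]].
  pose proof (Hd_d2 phi d Hd eta ltac:(lra)) as Hd2.
  destruct (Req_dec (d 2%nat eta) 0) as [Z|Z].
  - exfalso.
    pose proof (d2_zero phi d eta Hd Hr H0 ltac:(lra) Z) as Z1.
    pose proof (d1_mono phi d eta c2 Hd ltac:(lra)).
    pose proof (Hd_d1 phi d Hd c2 ltac:(lra)).
    assert (d 1%nat c2 = 0) by lra.
    rewrite Z in E3. assert (Zc1 : d 1%nat c1 = 0) by lra.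
    pose proof (const_zero phi d c1 Hd Hr Hl ltac:(lra) Zc1 m ltac:(lra)).
    rewrite Zc1 in E1. lra.
  - assert (Hlt : d 1%nat c1 < d 1%nat c2).
    { assert (0 < d 2%nat eta * (c2 - c1)) by (apply Rmult_lt_0_compat; lra). lra. }
    assert (Hgoal : l * phi u + (1 - l) * phi v - phi m =
       l * (1 - l) * (v - u) * (d 1%nat c2 - d 1%nat c1)).
    { replace (l * phi u + (1 - l) * phi v - phi m) with
        (- l * (phi m - phi u) + (1 - l) * (phi v - phi m)) by ring.
      rewrite E1, E2, Hm1, Hm2. ring. }
    assert (0 < l * (1 - l) * (v - u) * (d 1%nat c2 - d 1%nat c1)).
    { repeat apply Rmult_lt_0_compat; lra. }
    lra.
Qed.

Lemma conv_weak phi d u v l : Hd phi d -> Hrc phi -> Hlim phi -> phi 0 = 1 ->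
  0 <= u < v -> 0 < l < 1 ->
  phi (l * u + (1 - l) * v) <= l * phi u + (1 - l) * phi v.
Proof.
  intros Hd Hr Hl H0 Huv Hlam.
  pose proof (Hd_nonneg phi d Hd H0 u ltac:(lra)).
  destruct (Req_dec (phi u) 0) as [Z|Z].
  - assert (u <= l * u + (1 - l) * v) by (assert (0 <= (1-l)*(v-u)) by (apply Rmult_le_pos; lra); lra).
    pose proof (phi_noninc phi d u (l * u + (1 - l) * v) Hd Hr ltac:(lra)).
    pose proof (Hd_nonneg phi d Hd H0 v ltac:(lra)).
    assert (0 <= (1 - l) * phi v) by (apply Rmult_le_pos; lra). rewrite Z in *. lra.
  - left. apply (conv_strict phi d); auto. lra.
Qed.
Lemma Rpower_pos' x y : 0 < Rpower x y.
Proof. unfold Rpower. apply exp_pos. Qed.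

Lemma abspow_0 p : abspow 0 p = 0.
Proof. unfold abspow. destruct (Req_EM_T 0 0); [auto|congruence]. Qed.

Lemma abspow_nz x p : x <> 0 -> abspow x p = Rpower (Rabs x) p.
Proof. unfold abspow. destruct (Req_EM_T x 0); [congruence|auto]. Qed.

Lemma abspow_nonneg x p : 0 <= abspow x p.
Proof. unfold abspow. destruct (Req_EM_T x 0); [lra|]. left; apply Rpower_pos'. Qed.

Lemma abspow_pos x p : x <> 0 -> 0 < abspow x p.
Proof. intros. rewrite abspow_nz by auto. apply Rpower_pos'. Qed.

Lemma abspow_opp x p : abspow (- x) p = abspow x p.
Proof.
  destruct (Req_dec x 0) as [->|Hn]. rewrite Ropp_0; auto.
  rewrite !abspow_nz; try lra. rewrite Rabs_Ropp; auto.
Qed.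

Lemma abspow_lt x y p : 0 < p -> Rabs x < Rabs y -> abspow x p < abspow y p.
Proof.
  intros Hp Hxy. assert (y <> 0) by (intro; subst; rewrite Rabs_R0 in Hxy; pose proof (Rabs_pos x); lra).
  destruct (Req_dec x 0) as [->|Hn].
  - rewrite abspow_0. apply abspow_pos; auto.
  - rewrite !abspow_nz by auto. apply Rlt_Rpower_l; auto. split; auto. apply Rabs_pos_lt; auto.
Qed.

Lemma abspow_le x y p : 0 < p -> Rabs x <= Rabs y -> abspow x p <= abspow y p.
Proof.
  intros Hp [H|H]. left; apply abspow_lt; auto.
  destruct (Req_dec x 0) as [->|Hn].
  - rewrite abspow_0. apply abspow_nonneg.
  - assert (y <> 0) by (intro; subst; rewrite Rabs_R0 in H; apply Hn; revert H; unfold Rabs; destruct (Rcase_abs x); lra).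
    rewrite !abspow_nz by auto. rewrite H. lra.
Qed.

Lemma rpow_ge s p : 0 < p <= 1 -> 0 < s <= 1 -> s <= Rpower s p.
Proof.
  intros Hp Hs. unfold Rpower. rewrite <- (exp_ln s) at 1 by lra.
  assert (ln s <= 0).
  { destruct (Req_dec s 1) as [->|Hn]. rewrite ln_1; lra.
    left. rewrite <- ln_1. apply ln_increasing; lra. }
  assert (ln s <= p * ln s).
  { assert (0 <= (1 - p) * (- ln s)) by (apply Rmult_le_pos; lra). nra. }
  destruct H0 as [H0|H0]. left; apply exp_increasing; auto. rewrite <- H0; lra.
Qed.

Lemma abspow_scale s y p : 0 < p <= 1 -> 0 < s <= 1 -> s * abspow y p <= abspow (s * y) p.
Proof.
  intros Hp Hs. destruct (Req_dec y 0) as [->|Hn].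
  - rewrite Rmult_0_r, abspow_0. lra.
  - rewrite (abspow_nz y) by auto.
    rewrite (abspow_nz (s * y)) by (intro Z; apply Rmult_integral in Z; lra).
    rewrite Rabs_mult, (Rabs_pos_eq s) by lra.
    rewrite <- Rpower_mult_distr by (try lra; apply Rabs_pos_lt; auto).
    pose proof (rpow_ge s p Hp Hs). pose proof (Rpower_pos' (Rabs y) p).
    apply Rmult_le_compat_r; lra.
Qed.

Lemma abspow_sub x y p : 0 < p <= 1 -> abspow (x + y) p <= abspow x p + abspow y p.
Proof.
  intros Hp.
  destruct (Req_dec x 0) as [->|Hx]. rewrite Rplus_0_l, abspow_0; lra.
  destruct (Req_dec y 0) as [->|Hy]. rewrite Rplus_0_r, abspow_0; lra.
  pose proof (Rabs_pos_lt x Hx). pose proof (Rabs_pos_lt y Hy).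
  set (S := Rabs x + Rabs y).
  assert (H1 : abspow (x + y) p <= Rpower S p).
  { destruct (Req_dec (x + y) 0) as [->|Hxy]. rewrite abspow_0. left; apply Rpower_pos'.
    rewrite abspow_nz by auto. apply Rle_Rpower_l; [lra|]. split. apply Rabs_pos_lt; auto.
    apply Rabs_triang. }
  assert (Hsx : Rpower S p * (Rabs x / S) <= abspow x p).
  { rewrite abspow_nz by auto.
    replace (Rabs x) with (S * (Rabs x / S)) at 2 by (unfold S; field; lra).
    rewrite <- Rpower_mult_distr; [| unfold S; lra | apply Rdiv_lt_0_compat; unfold S; lra].
    apply Rmult_le_compat_l. left; apply Rpower_pos'. apply rpow_ge; auto.
    split. apply Rdiv_lt_0_compat; unfold S; lra. apply Rmult_le_reg_r with S. unfold S; lra.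
    unfold Rdiv. rewrite Rmult_assoc, Rinv_l by (unfold S; lra). unfold S; lra. }
  assert (Hsy : Rpower S p * (Rabs y / S) <= abspow y p).
  { rewrite abspow_nz by auto.
    replace (Rabs y) with (S * (Rabs y / S)) at 2 by (unfold S; field; lra).
    rewrite <- Rpower_mult_distr; [| unfold S; lra | apply Rdiv_lt_0_compat; unfold S; lra].
    apply Rmult_le_compat_l. left; apply Rpower_pos'. apply rpow_ge; auto.
    split. apply Rdiv_lt_0_compat; unfold S; lra. apply Rmult_le_reg_r with S. unfold S; lra.
    unfold Rdiv. rewrite Rmult_assoc, Rinv_l by (unfold S; lra). unfold S; lra. }
  assert (Rpower S p * (Rabs x / S) + Rpower S p * (Rabs y / S) = Rpower S p)
    by (unfold S; field; lra).
  lra.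
Qed.

Lemma fsum_ext n (f g : Fin.t n -> R) : (forall i, f i = g i) -> fsum n f = fsum n g.
Proof.
  revert f g; induction n; intros f g H; simpl; auto.
  rewrite H. f_equal. apply IHn. intros; apply H.
Qed.

Lemma fsum_plus n (f g : Fin.t n -> R) : fsum n (fun i => f i + g i) = fsum n f + fsum n g.
Proof. revert f g; induction n; intros f g; simpl. lra. rewrite IHn. ring. Qed.

Lemma fsum_le n (f g : Fin.t n -> R) : (forall i, f i <= g i) -> fsum n f <= fsum n g.
Proof.
  revert f g; induction n; intros f g H; simpl. lra.
  pose proof (H Fin.F1). pose proof (IHn (fun i => f (Fin.FS i)) (fun i => g (Fin.FS i)) (fun i => H _)). lra.
Qed.

Lemma fsum_zero n : fsum n (fun _ => 0) = 0.
Proof. induction n; simpl; auto. rewrite IHn; ring. Qed.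

Lemma fsum_nonneg n (f : Fin.t n -> R) : (forall i, 0 <= f i) -> 0 <= fsum n f.
Proof. intros H. rewrite <- (fsum_zero n). apply fsum_le; auto. Qed.

Lemma fsum_pos n (f : Fin.t n -> R) i : (forall i, 0 <= f i) -> 0 < f i -> 0 < fsum n f.
Proof.
  revert f i; induction n; intros f i H Hi. inversion i.
  simpl. revert Hi. pattern i; apply Fin.caseS'.
  - intros. pose proof (fsum_nonneg n (fun j => f (Fin.FS j)) (fun j => H _)). lra.
  - intros j Hj. pose proof (IHn (fun j => f (Fin.FS j)) j (fun j => H _) Hj). pose proof (H Fin.F1). lra.
Qed.

Lemma fsum_upd n (f g : Fin.t n -> R) i : (forall j, j <> i -> f j = g j) ->
  fsum n f + g i = fsum n g + f i.
Proof.
  revert f g i; induction n; intros f g i H. inversion i.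
  simpl. revert H. pattern i; apply Fin.caseS'.
  - intros H. assert (fsum n (fun i0 => f (Fin.FS i0)) = fsum n (fun i0 => g (Fin.FS i0))).
    { apply fsum_ext. intros j. apply H. intro Z; inversion Z. }
    lra.
  - intros j H. pose proof (IHn (fun i0 => f (Fin.FS i0)) (fun i0 => g (Fin.FS i0)) j) as IH.
    assert (f Fin.F1 = g Fin.F1) by (apply H; intro Z; inversion Z).
    simpl in IH.
    assert (fsum n (fun i0 => f (Fin.FS i0)) + g (Fin.FS j) = fsum n (fun i0 => g (Fin.FS i0)) + f (Fin.FS j)).
    { apply IH. intros k Hk. apply H. intro Z. apply Hk. apply Fin.FS_inj; auto. }
    lra.
Qed.

Fixpoint nsum (n : nat) : (Fin.t n -> nat) -> nat :=
  match n with
  | O => fun _ => 0%nat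
  | S m => fun f => (f Fin.F1 + nsum m (fun i => f (Fin.FS i)))%nat
  end.

Lemma nsum_ext n (f g : Fin.t n -> nat) : (forall i, f i = g i) -> nsum n f = nsum n g.
Proof.
  revert f g; induction n; intros f g H; simpl; [reflexivity|].
  rewrite H. f_equal. apply IHn. intros; apply H.
Qed.

Lemma nsum_upd n (f g : Fin.t n -> nat) i : (forall j, j <> i -> f j = g j) ->
  (nsum n f + g i = nsum n g + f i)%nat.
Proof.
  revert f g i; induction n; intros f g i H. inversion i.
  simpl. revert H. pattern i; apply Fin.caseS'.
  - intros H. assert (nsum n (fun i0 => f (Fin.FS i0)) = nsum n (fun i0 => g (Fin.FS i0))).
    { apply nsum_ext. intros j. apply H. intro Z; inversion Z. }
    lia.
  - intros j H. pose proof (IHn (fun i0 => f (Fin.FS i0)) (fun i0 => g (Fin.FS i0)) j) as IH.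
    assert (f Fin.F1 = g Fin.F1) by (apply H; intro Z; inversion Z).
    assert (nsum n (fun i0 => f (Fin.FS i0)) + g (Fin.FS j) = nsum n (fun i0 => g (Fin.FS i0)) + f (Fin.FS j))%nat.
    { apply IH. intros k Hk. apply H. intro Z. apply Hk. apply Fin.FS_inj; auto. }
    lia.
Qed.

Lemma nsum_zero_inv n (f : Fin.t n -> nat) : nsum n f = 0%nat -> forall i, f i = 0%nat.
Proof.
  revert f; induction n; intros f H i. inversion i.
  simpl in H. revert H. pattern i; apply Fin.caseS'.
  - intros; lia.
  - intros j Hs. apply (IHn (fun i => f (Fin.FS i))). lia.
Qed.
Definition upd {D : nat} (th : vecR D) (i : Fin.t D) (v : R) : vecR D :=
  fun j => if Fin.eq_dec j i then v else th j.

Lemma lpp_upd {D} p (th t : vecR D) i v :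
  lpp p (upd th i v) t + abspow (th i - t i) p = lpp p th t + abspow (v - t i) p.
Proof.
  unfold lpp.
  pose proof (fsum_upd D (fun j => abspow (upd th i v j - t j) p) (fun j => abspow (th j - t j) p) i) as E.
  assert (Ei : upd th i v i = v) by (unfold upd; destruct (Fin.eq_dec i i); congruence).
  cbv beta in E. rewrite Ei in E. apply E. intros j Hj. unfold upd. destruct (Fin.eq_dec j i); [congruence|auto].
Qed.

Lemma lpp_self {D} p (t : vecR D) : lpp p t t = 0.
Proof.
  unfold lpp. rewrite <- (fsum_zero D). apply fsum_ext. intros i.
  rewrite Rminus_diag. apply abspow_0.
Qed.

Lemma lpp_sym {D} p (t t' : vecR D) : lpp p t t' = lpp p t' t.
Proof.
  unfold lpp. apply fsum_ext. intros i. rewrite <- abspow_opp. f_equal. ring.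
Qed.

Lemma lpp_nonneg {D} p (t t' : vecR D) : 0 <= lpp p t t'.
Proof. apply fsum_nonneg. intros; apply abspow_nonneg. Qed.

Lemma lpp_pos {D} p (t t' : vecR D) : t <> t' -> 0 < lpp p t t'.
Proof.
  intros Hn. destruct (classic (exists i, t i <> t' i)) as [[i Hi]|Hno].
  - apply (fsum_pos D _ i). intros; apply abspow_nonneg. apply abspow_pos. lra.
  - exfalso. apply Hn. apply functional_extensionality. intros i.
    destruct (Req_dec (t i) (t' i)); auto. exfalso; apply Hno; exists i; auto.
Qed.

Lemma lpp_tri {D} p (u v w : vecR D) : 0 < p <= 1 -> lpp p u w <= lpp p u v + lpp p v w.
Proof.
  intros Hp. unfold lpp. rewrite <- fsum_plus. apply fsum_le. intros i.
  replace (u i - w i) with ((u i - v i) + (v i - w i)) by ring. apply abspow_sub; auto.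
Qed.

Lemma noninc_strict phi d A y y' p : Hd phi d -> Hrc phi -> Hlim phi -> 0 < p -> 0 <= A ->
  Rabs y' < Rabs y ->
  phi (A + abspow y p) <= phi (A + abspow y' p) /\
  (0 < phi (A + abspow y p) -> phi (A + abspow y p) < phi (A + abspow y' p)).
Proof.
  intros Hd Hr Hl Hp HA Hy. pose proof (abspow_lt y' y p Hp Hy). pose proof (abspow_nonneg y' p).
  split.
  - apply (phi_noninc phi d); auto; lra.
  - intros Hpos. apply (strict_dec phi d); auto. lra.
Qed.

Lemma between phi d p A1 A2 a b x : Hd phi d -> Hrc phi -> Hlim phi -> phi 0 = 1 ->
  0 < p <= 1 -> 0 <= A1 -> 0 <= A2 -> a < x < b ->
  let C := abspow (b - a) p in
  let s := (x - a) / (b - a) in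
  phi (A1 + abspow (x - a) p) + phi (A2 + abspow (x - b) p) = 0 \/
  phi (A1 + abspow (x - a) p) + phi (A2 + abspow (x - b) p) <
  (1 - s) * (phi A1 + phi (A2 + C)) + s * (phi (A1 + C) + phi A2).
Proof.
  intros Hd Hr Hl H0 Hp HA1 HA2 Hx C s.
  assert (Hs : 0 < s < 1).
  { unfold s. split. apply Rdiv_lt_0_compat; lra.
    apply Rmult_lt_reg_r with (b - a). lra. unfold Rdiv. rewrite Rmult_assoc, Rinv_l by lra. lra. }
  assert (HC : 0 < C) by (apply abspow_pos; lra).
  assert (Exa : x - a = s * (b - a)) by (unfold s; field; lra).
  assert (Exb : x - b = - ((1 - s) * (b - a))) by (unfold s; field; lra).
  assert (T1 : s * C <= abspow (x - a) p).
  { rewrite Exa. apply abspow_scale; lra. }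
  assert (T2 : (1 - s) * C <= abspow (x - b) p).
  { rewrite Exb, abspow_opp. apply abspow_scale; lra. }
  assert (M1 : phi (A1 + abspow (x - a) p) <= phi (A1 + s * C)).
  { apply (phi_noninc phi d); auto. split; [|lra]. pose proof (Rmult_le_pos s C); lra. }
  assert (M2 : phi (A2 + abspow (x - b) p) <= phi (A2 + (1 - s) * C)).
  { apply (phi_noninc phi d); auto. split; [|lra]. pose proof (Rmult_le_pos (1 - s) C); lra. }
  assert (E1 : A1 + s * C = (1 - s) * A1 + (1 - (1 - s)) * (A1 + C)) by ring.
  assert (E2 : A2 + (1 - s) * C = s * A2 + (1 - s) * (A2 + C)) by ring.
  assert (K1 : phi (A1 + s * C) <= (1 - s) * phi A1 + (1 - (1 - s)) * phi (A1 + C)).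
  { rewrite E1. apply (conv_weak phi d); auto; lra. }
  assert (K2 : phi (A2 + (1 - s) * C) <= s * phi A2 + (1 - s) * phi (A2 + C)).
  { rewrite E2. apply (conv_weak phi d); auto; lra. }
  destruct (Req_dec (phi A1) 0) as [Z1|Z1]; destruct (Req_dec (phi A2) 0) as [Z2|Z2].
  - left.
    assert (phi (A1 + abspow (x - a) p) <= phi A1).
    { apply (phi_noninc phi d); auto. pose proof (abspow_nonneg (x - a) p); lra. }
    assert (phi (A2 + abspow (x - b) p) <= phi A2).
    { apply (phi_noninc phi d); auto. pose proof (abspow_nonneg (x - b) p); lra. }
    pose proof (Hd_nonneg phi d Hd H0 (A1 + abspow (x - a) p) ltac:(pose proof (abspow_nonneg (x - a) p); lra)).
    pose proof (Hd_nonneg phi d Hd H0 (A2 + abspow (x - b) p) ltac:(pose proof (abspow_nonneg (x - b) p); lra)).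
    lra.
  - right.
    assert (K2' : phi (A2 + (1 - s) * C) < s * phi A2 + (1 - s) * phi (A2 + C)).
    { rewrite E2. apply (conv_strict phi d); auto; try lra.
      pose proof (Hd_nonneg phi d Hd H0 A2 HA2); lra. }
    lra.
  - right.
    assert (K1' : phi (A1 + s * C) < (1 - s) * phi A1 + (1 - (1 - s)) * phi (A1 + C)).
    { rewrite E1. apply (conv_strict phi d); auto; try lra.
      pose proof (Hd_nonneg phi d Hd H0 A1 HA1); lra. }
    lra.
  - right.
    assert (K2' : phi (A2 + (1 - s) * C) < s * phi A2 + (1 - s) * phi (A2 + C)).
    { rewrite E2. apply (conv_strict phi d); auto; try lra.
      pose proof (Hd_nonneg phi d Hd H0 A2 HA2); lra. }
    lra.
Qed.
Definition hfun (phi : R -> R) p A1 A2 a b y :=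
  phi (A1 + abspow (y - a) p) + phi (A2 + abspow (y - b) p).

Lemma outside2 phi d p A1 A2 y1 y2 y1' y2' : Hd phi d -> Hrc phi -> Hlim phi -> phi 0 = 1 -> 0 < p ->
  0 <= A1 -> 0 <= A2 -> Rabs y1' < Rabs y1 -> Rabs y2' < Rabs y2 ->
  phi (A1 + abspow y1 p) + phi (A2 + abspow y2 p) = 0 \/
  phi (A1 + abspow y1 p) + phi (A2 + abspow y2 p) < phi (A1 + abspow y1' p) + phi (A2 + abspow y2' p).
Proof.
  intros Hd Hr Hl H0 Hp HA1 HA2 H1 H2.
  destruct (noninc_strict phi d A1 y1 y1' p Hd Hr Hl Hp HA1 H1) as [L1 S1].
  destruct (noninc_strict phi d A2 y2 y2' p Hd Hr Hl Hp HA2 H2) as [L2 S2].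
  pose proof (Hd_nonneg phi d Hd H0 (A1 + abspow y1 p) ltac:(pose proof (abspow_nonneg y1 p); lra)).
  pose proof (Hd_nonneg phi d Hd H0 (A2 + abspow y2 p) ltac:(pose proof (abspow_nonneg y2 p); lra)).
  destruct (Req_dec (phi (A1 + abspow y1 p)) 0); destruct (Req_dec (phi (A2 + abspow y2 p)) 0).
  - left; lra.
  - right. pose proof (S2 ltac:(lra)). lra.
  - right. pose proof (S1 ltac:(lra)). lra.
  - right. pose proof (S2 ltac:(lra)). lra.
Qed.

Lemma oneD phi d p A1 A2 a b x : Hd phi d -> Hrc phi -> Hlim phi -> phi 0 = 1 ->
  0 < p <= 1 -> 0 <= A1 -> 0 <= A2 -> x <> a -> x <> b ->
  hfun phi p A1 A2 a b x = 0 \/ hfun phi p A1 A2 a b x < hfun phi p A1 A2 a b a \/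
  hfun phi p A1 A2 a b x < hfun phi p A1 A2 a b b.
Proof.
  intros Hd Hr Hl H0 Hp HA1 HA2 Ha Hb. unfold hfun.
  rewrite !Rminus_diag, !abspow_0, !Rplus_0_r.
  assert (Eab : abspow (a - b) p = abspow (b - a) p).
  { rewrite <- abspow_opp. f_equal; ring. }
  destruct (Rlt_or_le x a) as [Hxa|Hxa]; destruct (Rlt_or_le x b) as [Hxb|Hxb].
  - destruct (Rle_or_lt a b) as [Hab|Hab].
    + destruct (outside2 phi d p A1 A2 (x - a) (x - b) 0 (a - b) Hd Hr Hl H0 ltac:(lra) HA1 HA2)
        as [Z|Z].
      * rewrite Rabs_R0. apply Rabs_pos_lt. lra.
      * rewrite !Rabs_left1 by lra. lra.
      * left; auto.
      * right; left. rewrite abspow_0, Rplus_0_r in Z. auto.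
    + destruct (outside2 phi d p A1 A2 (x - a) (x - b) (b - a) 0 Hd Hr Hl H0 ltac:(lra) HA1 HA2)
        as [Z|Z].
      * rewrite !Rabs_left1 by lra. lra.
      * rewrite Rabs_R0. apply Rabs_pos_lt. lra.
      * left; auto.
      * right; right. rewrite abspow_0, Rplus_0_r in Z. auto.
  -
    assert (Hbx : b < x) by lra.
    destruct (between phi d p A2 A1 b a x Hd Hr Hl H0 Hp HA2 HA1 ltac:(lra)) as [Z|Z].
    + left; lra.
    + cbv zeta in Z. rewrite Eab in *.
      set (s := (x - b) / (a - b)) in Z.
      assert (0 < s < 1).
      { unfold s. split. apply Rdiv_lt_0_compat; lra.
        apply Rmult_lt_reg_r with (a - b). lra. unfold Rdiv. rewrite Rmult_assoc, Rinv_l by lra. lra. }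
      destruct (Rle_or_lt (phi A1 + phi (A2 + abspow (b - a) p)) (phi (A1 + abspow (b - a) p) + phi A2)).
      * right; right. nra.
      * right; left. nra.
  -
    assert (Hax : a < x) by lra.
    destruct (between phi d p A1 A2 a b x Hd Hr Hl H0 Hp HA1 HA2 ltac:(lra)) as [Z|Z].
    + left; lra.
    + cbv zeta in Z.
      set (s := (x - a) / (b - a)) in Z.
      assert (0 < s < 1).
      { unfold s. split. apply Rdiv_lt_0_compat; lra.
        apply Rmult_lt_reg_r with (b - a). lra. unfold Rdiv. rewrite Rmult_assoc, Rinv_l by lra. lra. }
      rewrite Eab.
      destruct (Rle_or_lt (phi A1 + phi (A2 + abspow (b - a) p)) (phi (A1 + abspow (b - a) p) + phi A2)).
      * right; right. nra.
      * right; left. nra.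
  - assert (a < x) by lra. assert (b < x) by lra.
    destruct (Rle_or_lt a b) as [Hab|Hab].
    + destruct (outside2 phi d p A1 A2 (x - a) (x - b) (b - a) 0 Hd Hr Hl H0 ltac:(lra) HA1 HA2)
        as [Z|Z].
      * rewrite !Rabs_right by lra. lra.
      * rewrite Rabs_R0. apply Rabs_pos_lt. lra.
      * left; auto.
      * right; right. rewrite abspow_0, Rplus_0_r in Z. auto.
    + destruct (outside2 phi d p A1 A2 (x - a) (x - b) 0 (a - b) Hd Hr Hl H0 ltac:(lra) HA1 HA2)
        as [Z|Z].
      * rewrite Rabs_R0. apply Rabs_pos_lt. lra.
      * rewrite !Rabs_right by lra. lra.
      * left; auto.
      * right; left. rewrite abspow_0, Rplus_0_r in Z. auto.
Qed.
Definition bad {D : nat} (t1 t2 th : vecR D) (i : Fin.t D) : nat :=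
  if Req_EM_T (th i) (t1 i) then 0%nat else if Req_EM_T (th i) (t2 i) then 0%nat else 1%nat.

Lemma nsum_zero n : nsum n (fun _ => 0%nat) = 0%nat.
Proof. induction n; simpl; auto. Qed.

Lemma nsum_pos_ex n (f : Fin.t n -> nat) : nsum n f <> 0%nat -> exists i, f i <> 0%nat.
Proof.
  intros Hn. destruct (classic (exists i, f i <> 0%nat)) as [|Hno]; auto.
  exfalso. apply Hn. rewrite <- (nsum_zero n). apply nsum_ext. intros i.
  destruct (Nat.eq_dec (f i) 0); auto. exfalso; apply Hno; exists i; auto.
Qed.

Lemma FA phi d p D (t1 t2 : vecR D) : Hd phi d -> Hrc phi -> Hlim phi -> phi 0 = 1 -> 0 < p <= 1 ->
  (forall t, in_Cart2 t1 t2 t -> t <> t1 -> t <> t2 ->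
     phi (lpp p t t1) + phi (lpp p t t2) < 1 + phi (lpp p t1 t2)) ->
  forall n th, (nsum D (bad t1 t2 th) <= n)%nat ->
  phi (lpp p th t1) + phi (lpp p th t2) <= 1 + phi (lpp p t1 t2) /\
  (th <> t1 -> th <> t2 -> phi (lpp p th t1) + phi (lpp p th t2) < 1 + phi (lpp p t1 t2)).
Proof.
  intros Hd Hr Hl H0 Hp Hcart.
  assert (Hg : 0 <= phi (lpp p t1 t2)) by (apply (Hd_nonneg phi d); auto; apply lpp_nonneg).
  assert (Hself : forall th, (th = t1 \/ th = t2) ->
     phi (lpp p th t1) + phi (lpp p th t2) = 1 + phi (lpp p t1 t2)).
  { intros th [->| ->]; rewrite lpp_self, H0. ring. rewrite lpp_sym; ring. }
  induction n; intros th Hn.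
  - assert (Hc : in_Cart2 t1 t2 th).
    { intros i. assert (Z : bad t1 t2 th i = 0%nat) by (apply (nsum_zero_inv D); lia).
      unfold bad in Z. destruct (Req_EM_T (th i) (t1 i)); auto.
      destruct (Req_EM_T (th i) (t2 i)); auto. discriminate. }
    destruct (classic (th = t1 \/ th = t2)) as [Hs|Hs].
    + split. rewrite Hself; auto; lra. intros; exfalso; tauto.
    + assert (th <> t1) by tauto. assert (th <> t2) by tauto.
      pose proof (Hcart th Hc H H1). split; [lra|auto].
  - destruct (Nat.eq_dec (nsum D (bad t1 t2 th)) 0) as [Z|Z].
    { apply IHn. lia. }
    destruct (nsum_pos_ex D _ Z) as [i Hi].
    assert (Hb : th i <> t1 i /\ th i <> t2 i).
    { unfold bad in Hi. destruct (Req_EM_T (th i) (t1 i)); [congruence|].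
      destruct (Req_EM_T (th i) (t2 i)); [congruence|]. auto. }
    assert (Hbi : bad t1 t2 th i = 1%nat).
    { unfold bad. destruct (Req_EM_T (th i) (t1 i)); [tauto|].
      destruct (Req_EM_T (th i) (t2 i)); [tauto|]. auto. }
    set (tha := upd th i (t1 i)). set (thb := upd th i (t2 i)).
    assert (Hcnt : forall v, (v = t1 i \/ v = t2 i) ->
        (nsum D (bad t1 t2 (upd th i v)) <= n)%nat).
    { intros v Hv.
      pose proof (nsum_upd D (bad t1 t2 (upd th i v)) (bad t1 t2 th) i) as E.
      assert (Ev : bad t1 t2 (upd th i v) i = 0%nat).
      { unfold bad, upd. destruct (Fin.eq_dec i i); [|congruence].
        destruct (Req_EM_T v (t1 i)); auto. destruct (Req_EM_T v (t2 i)); auto. tauto. }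
      rewrite Ev, Hbi in E.
      assert (nsum D (bad t1 t2 (upd th i v)) + 1 = nsum D (bad t1 t2 th) + 0)%nat.
      { apply E. intros j Hj. unfold bad, upd. destruct (Fin.eq_dec j i); [congruence|auto]. }
      lia. }
    destruct (IHn tha (Hcnt _ (or_introl eq_refl))) as [IHa _].
    destruct (IHn thb (Hcnt _ (or_intror eq_refl))) as [IHb _].
    set (A1 := lpp p tha t1). set (A2 := lpp p thb t2).
    pose proof (lpp_upd p th t1 i (t1 i)) as U1.
    pose proof (lpp_upd p th t1 i (t2 i)) as U2.
    pose proof (lpp_upd p th t2 i (t1 i)) as U3.
    pose proof (lpp_upd p th t2 i (t2 i)) as U4.
    fold tha thb in U1, U2, U3, U4. fold A1 in U1. fold A2 in U4.
    rewrite Rminus_diag, abspow_0 in U1, U4.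
    assert (E1 : lpp p th t1 = A1 + abspow (th i - t1 i) p) by lra.
    assert (E2 : lpp p th t2 = A2 + abspow (th i - t2 i) p) by lra.
    assert (E3 : lpp p thb t1 = A1 + abspow (t2 i - t1 i) p) by lra.
    assert (E4 : lpp p tha t2 = A2 + abspow (t1 i - t2 i) p) by lra.
    assert (HA1 : 0 <= A1) by apply lpp_nonneg.
    assert (HA2 : 0 <= A2) by apply lpp_nonneg.
    destruct (oneD phi d p A1 A2 (t1 i) (t2 i) (th i) Hd Hr Hl H0 Hp HA1 HA2 (proj1 Hb) (proj2 Hb))
      as [Q|[Q|Q]]; unfold hfun in Q; try rewrite Rminus_diag, abspow_0, Rplus_0_r in Q;
      rewrite <- E1, <- E2 in Q.
    + split; intros; lra.
    + rewrite <- E4 in Q. change (phi (lpp p th t1) + phi (lpp p th t2) <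
         phi (lpp p tha t1) + phi (lpp p tha t2)) in Q. split; intros; lra.
    + rewrite <- E3 in Q. change (phi (lpp p th t1) + phi (lpp p th t2) <
         phi (lpp p thb t1) + phi (lpp p thb t2)) in Q. split; intros; lra.
Qed.
Lemma FB phi d p D (th t1 t2 : vecR D) : Hd phi d -> Hrc phi -> Hlim phi -> phi 0 = 1 -> 0 < p <= 1 ->
  t1 <> t2 -> th <> t1 ->
  phi (lpp p th t1) - phi (lpp p th t2) < 1 - phi (lpp p t1 t2).
Proof.
  intros Hd Hr Hl H0 Hp H12 H1.
  set (P1 := lpp p th t1). set (P2 := lpp p th t2). set (dd := lpp p t1 t2).
  assert (HP1 : 0 < P1) by (apply lpp_pos; auto).
  assert (Hdd : 0 < dd) by (apply lpp_pos; auto).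
  assert (HP2 : P2 <= P1 + dd) by (apply lpp_tri; auto).
  set (v := P1 + dd).
  assert (M : phi v <= phi P2).
  { apply (phi_noninc phi d); auto. split; [apply lpp_nonneg|auto]. }
  assert (Hv : 0 < v) by (unfold v; lra).
  set (l1 := dd / v). set (l2 := P1 / v).
  assert (Hl1 : 0 < l1 < 1).
  { unfold l1, v. split. apply Rdiv_lt_0_compat; lra.
    apply Rmult_lt_reg_r with (P1 + dd). lra. unfold Rdiv. rewrite Rmult_assoc, Rinv_l by lra. lra. }
  assert (Hl2 : 0 < l2 < 1).
  { unfold l2, v. split. apply Rdiv_lt_0_compat; lra.
    apply Rmult_lt_reg_r with (P1 + dd). lra. unfold Rdiv. rewrite Rmult_assoc, Rinv_l by lra. lra. }
  assert (E1 : P1 = l1 * 0 + (1 - l1) * v) by (unfold l1, v; field; lra).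
  assert (E2 : dd = l2 * 0 + (1 - l2) * v) by (unfold l2, v; field; lra).
  assert (Hs : l1 + l2 = 1) by (unfold l1, l2, v; field; lra).
  assert (C1 : phi P1 <= l1 * phi 0 + (1 - l1) * phi v).
  { replace (phi P1) with (phi (l1 * 0 + (1 - l1) * v)) by (f_equal; auto).
    apply (conv_weak phi d); auto; lra. }
  assert (C2 : phi dd < l2 * phi 0 + (1 - l2) * phi v).
  { replace (phi dd) with (phi (l2 * 0 + (1 - l2) * v)) by (f_equal; auto).
    apply (conv_strict phi d); auto; lra. }
  rewrite H0 in C1, C2. nra.
Qed.

Lemma cmp_real x y g al be : 0 <= g < 1 -> 0 <= x -> 0 <= y ->
  x + y < 1 + g -> x - y < 1 - g -> y - x < 1 - g ->
  Rabs (al + be * g) <= Rabs (al * x + be * y) ->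
  Rabs (al * g + be) <= Rabs (al * x + be * y) ->
  al + be * g = 0 /\ al * g + be = 0.
Proof.
  intros Hg Hx Hy HA HB1 HB2 C1 C2.
  set (u1 := al + be * g) in *. set (u2 := al * g + be) in *.
  set (s := (x + y) / (1 + g)). set (dl := (x - y) / (1 - g)).
  set (P := u1 + u2). set (Q := u1 - u2).
  assert (EX : al * x + be * y = (s * P + dl * Q) / 2).
  { unfold s, dl, P, Q, u1, u2. field. lra. }
  assert (Hs : Rabs s < 1).
  { unfold s. rewrite Rabs_pos_eq. apply Rmult_lt_reg_r with (1 + g). lra.
    unfold Rdiv. rewrite Rmult_assoc, Rinv_l by lra. lra.
    apply Rmult_le_pos. lra. left; apply Rinv_0_lt_compat; lra. }
  assert (Hd : Rabs dl < 1).
  { unfold dl. unfold Rdiv. rewrite Rabs_mult, (Rabs_pos_eq (/ (1 - g))) by (left; apply Rinv_0_lt_compat; lra).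
    apply Rmult_lt_reg_r with (1 - g). lra. rewrite Rmult_assoc, Rinv_l by lra.
    rewrite Rmult_1_r, Rmult_1_l. apply Rabs_def1; lra. }
  assert (Hmax : Rabs P + Rabs Q <= 2 * Rabs (al * x + be * y)).
  { unfold P, Q. revert C1 C2. unfold Rabs.
    destruct (Rcase_abs (u1 + u2)); destruct (Rcase_abs (u1 - u2));
    destruct (Rcase_abs u1); destruct (Rcase_abs u2); destruct (Rcase_abs (al * x + be * y)); lra. }
  assert (Htr : 2 * Rabs (al * x + be * y) <= Rabs s * Rabs P + Rabs dl * Rabs Q).
  { rewrite EX. unfold Rdiv. rewrite Rabs_mult, Rabs_inv, (Rabs_pos_eq 2) by lra.
    rewrite <- !Rabs_mult. pose proof (Rabs_triang (s * P) (dl * Q)).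
    replace (2 * (Rabs (s * P + dl * Q) * / 2)) with (Rabs (s * P + dl * Q)) by field. lra. }
  assert (HP : Rabs s * Rabs P <= Rabs P) by (pose proof (Rabs_pos P); pose proof (Rabs_pos s); nra).
  assert (HQ : Rabs dl * Rabs Q <= Rabs Q) by (pose proof (Rabs_pos Q); pose proof (Rabs_pos dl); nra).
  assert (P = 0).
  { destruct (Req_dec P 0); auto. pose proof (Rabs_pos_lt P H).
    assert (Rabs s * Rabs P < Rabs P) by (pose proof (Rabs_pos s); nra). lra. }
  assert (Q = 0).
  { destruct (Req_dec Q 0); auto. pose proof (Rabs_pos_lt Q H0).
    assert (Rabs dl * Rabs Q < Rabs Q) by (pose proof (Rabs_pos dl); nra). lra. }
  unfold P, Q in *. lra.
Qed.

Lemma hinner_zero_l (H : RHilbert) (w : H) : hinner hzero w = 0.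
Proof.
  pose proof (hinner_addl H hzero hzero w) as E. rewrite hadd0 in E. lra.
Qed.

Lemma hinner_opp_l (H : RHilbert) (v w : H) : hinner (hopp v) w = - hinner v w.
Proof.
  pose proof (hinner_addl H v (hopp v) w) as E. rewrite haddN, hinner_zero_l in E. lra.
Qed.

Lemma hinner_add_r (H : RHilbert) (z u v : H) : hinner z (hadd u v) = hinner z u + hinner z v.
Proof. rewrite hinner_sym, hinner_addl, (hinner_sym H u), (hinner_sym H v). auto. Qed.

Lemma hinner_scal_r (H : RHilbert) c (z u : H) : hinner z (hscal c u) = c * hinner z u.
Proof. rewrite hinner_sym, hinner_scall, (hinner_sym H u). auto. Qed.

Lemma hinner_zero_r (H : RHilbert) (z : H) : hinner z hzero = 0.
Proof. rewrite hinner_sym. apply hinner_zero_l. Qed.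

Lemma hinner_sub_r (H : RHilbert) (z y v : H) : hinner z (hsub y v) = hinner z y - hinner z v.
Proof.
  unfold hsub. rewrite hinner_add_r, (hinner_sym H z (hopp v)), hinner_opp_l, (hinner_sym H v). ring.
Qed.

Definition comb {H : RHilbert} (a1 a2 r : H) (al be : R) : Prop :=
  forall z, hinner z r = al * hinner z a1 + be * hinner z a2.

Lemma span_comb (H : RHilbert) (a1 a2 : H) M v : in_span M v ->
  (forall x, In x M -> x = a1 \/ x = a2) -> exists al be, comb a1 a2 v al be.
Proof.
  induction 1 as [|M v x c Hs IH]; intros HM.
  - exists 0, 0. intros z. rewrite hinner_zero_r. ring.
  - destruct IH as [al [be Hc]]. intros y Hy. apply HM. right; auto.
    destruct (HM x (or_introl eq_refl)) as [->| ->].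
    + exists (al + c), be. intros z. rewrite hinner_add_r, hinner_scal_r, Hc. ring.
    + exists al, (be + c). intros z. rewrite hinner_add_r, hinner_scal_r, Hc. ring.
Qed.

Lemma comb_zero (H : RHilbert) (a1 a2 r : H) al be : comb a1 a2 r al be ->
  hinner a1 r = 0 -> hinner a2 r = 0 -> r = hzero.
Proof.
  intros Hc H1 H2. apply hinner_def. rewrite Hc.
  rewrite (hinner_sym H r a1), (hinner_sym H r a2), H1, H2. ring.
Qed.

Lemma span0 (H : RHilbert) (v : H) : in_span nil v -> v = hzero.
Proof. intros Hs. inversion Hs. auto. Qed.

Lemma span1 (H : RHilbert) (x v : H) : in_span (x :: nil) v ->
  exists c, forall z, hinner z v = c * hinner z x.
Proof.
  intros Hs. inversion Hs; subst. apply span0 in H3. subst.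
  exists c. intros z. rewrite hinner_add_r, hinner_scal_r, hinner_zero_r. ring.
Qed.
Lemma hyp_conv g x y : 0 <= g < 1 ->
  Rabs (1 / (1 * 1 - g * g) * x + - g / (1 * 1 - g * g) * y) +
  Rabs (- g / (1 * 1 - g * g) * x + 1 / (1 * 1 - g * g) * y) < 1 -> x + y < 1 + g.
Proof.
  intros Hg Hn.
  pose proof (Rle_abs (1 / (1 * 1 - g * g) * x + - g / (1 * 1 - g * g) * y)).
  pose proof (Rle_abs (- g / (1 * 1 - g * g) * x + 1 / (1 * 1 - g * g) * y)).
  assert (E : 1 / (1 * 1 - g * g) * x + - g / (1 * 1 - g * g) * y +
     (- g / (1 * 1 - g * g) * x + 1 / (1 * 1 - g * g) * y) = (x + y) / (1 + g)).
  { field. split; nra. }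
  assert ((x + y) / (1 + g) < 1) by lra.
  apply Rmult_lt_reg_r with (/ (1 + g)). apply Rinv_0_lt_compat; lra.
  rewrite Rinv_r by lra. auto.
Qed.

Theorem mainTheorem14 (D : nat) (H : RHilbert) (a : vecR D -> H)
  (phi : R -> R) (p : R) (t1 t2 : vecR D) :
  (1 <= D)%nat ->
  CMF_dictionary a phi p ->
  t1 <> t2 ->
  (forall t : vecR D, in_Cart2 t1 t2 t -> t <> t1 -> t <> t2 ->
     let G : mat2 := ((kernel phi p t1 t1, kernel phi p t1 t2),
                      (kernel phi p t2 t1, kernel phi p t2 t2)) in
     let g : R * R := (kernel phi p t t1, kernel phi p t t2) in
     norm1_2 (mulv2 (inv2 G) g) < 1) ->
  exact_2step_recovery a t1 t2.
Proof.
  intros HD [[Hr [d HdH]] [H0 [Hl [Hp Hker]]]] H12 Hyp.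
  assert (Hd0 : Hd phi d) by exact HdH. clear HdH. rename Hd0 into Hdd. change (Hrc phi) in Hr. change (Hlim phi) in Hl.
  set (g := phi (lpp p t1 t2)).
  assert (Hg : 0 <= g < 1).
  { split. apply (Hd_nonneg phi d Hdd); auto. apply lpp_nonneg.
    pose proof (lpp_pos p t1 t2 H12) as Hlp.
    pose proof (Hd_nonneg phi d Hdd H0 (lpp p t1 t2) ltac:(lra)) as Hnn.
    destruct Hnn as [Hpos|Hz]; [|unfold g; lra].
    pose proof (strict_dec phi d 0 (lpp p t1 t2) Hdd Hr Hl ltac:(lra) Hpos).
    unfold g; lra. }
  assert (Hcart : forall t, in_Cart2 t1 t2 t -> t <> t1 -> t <> t2 ->
     phi (lpp p t t1) + phi (lpp p t t2) < 1 + phi (lpp p t1 t2)).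
  { intros t Hc Ht1 Ht2. specialize (Hyp t Hc Ht1 Ht2). cbv zeta in Hyp.
    unfold norm1_2, mulv2, inv2, det2, kernel in Hyp. simpl in Hyp.
    rewrite !lpp_self, H0, (lpp_sym p t2 t1) in Hyp. fold g in Hyp |- *.
    apply hyp_conv; auto. }
  assert (Hgram : forall t t', hinner (a t) (a t') = phi (lpp p t t')) by (intros; rewrite Hker; reflexivity).
  assert (H11 : hinner (a t1) (a t1) = 1) by (rewrite Hgram, lpp_self; auto).
  assert (H22 : hinner (a t2) (a t2) = 1) by (rewrite Hgram, lpp_self; auto).
  assert (H12g : hinner (a t1) (a t2) = g) by (rewrite Hgram; auto).
  assert (H21g : hinner (a t2) (a t1) = g) by (rewrite Hgram, lpp_sym; auto).
  assert (HA : forall th, th <> t1 -> th <> t2 -> phi (lpp p th t1) + phi (lpp p th t2) < 1 + g).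
  { intros th Ht1 Ht2.
    destruct (FA phi d p D t1 t2 Hdd Hr Hl H0 Hp Hcart _ th (le_n _)) as [_ X]. apply X; auto. }
  assert (Cmp : forall r al be th, comb (a t1) (a t2) r al be -> r <> hzero ->
            is_argmax a r th -> th = t1 \/ th = t2).
  { intros r al be th Hc Hr0 Harg.
    destruct (classic (th = t1 \/ th = t2)) as [|Hn]; auto. exfalso.
    assert (Ht1 : th <> t1) by tauto. assert (Ht2 : th <> t2) by tauto.
    pose proof (Harg t1) as A1. pose proof (Harg t2) as A2.
    rewrite !Hc, H11, H12g, !Hgram in A1. rewrite !Hc, H21g, H22, !Hgram in A2.
    pose proof (HA th Ht1 Ht2) as QA.
    pose proof (FB phi d p D th t1 t2 Hdd Hr Hl H0 Hp H12 Ht1) as QB1.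
    pose proof (FB phi d p D th t2 t1 Hdd Hr Hl H0 Hp (not_eq_sym H12) Ht2) as QB2.
    rewrite (lpp_sym p t2 t1) in QB2. fold g in QB1, QB2.
    assert (Hx : 0 <= phi (lpp p th t1)) by (apply (Hd_nonneg phi d Hdd H0); apply lpp_nonneg).
    assert (Hy : 0 <= phi (lpp p th t2)) by (apply (Hd_nonneg phi d Hdd H0); apply lpp_nonneg).
    destruct (cmp_real (phi (lpp p th t1)) (phi (lpp p th t2)) g al be Hg Hx Hy QA QB1 QB2)
      as [Z1 Z2].
    - replace (al * 1 + be * g) with (al + be * g) in A1 by ring. auto.
    - replace (al * g + be * 1) with (al * g + be) in A2 by ring. auto.
    - apply Hr0. apply (comb_zero H (a t1) (a t2) r al be Hc).
      + rewrite Hc, H11, H12g. lra.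
      + rewrite Hc, H21g, H22. lra. }
  intros c1 c2 Hc1 Hc2 L [Hpath Hres].
  set (y := hadd (hscal c1 (a t1)) (hscal c2 (a t2))) in *.
  assert (Hy : forall z, hinner z y = c1 * hinner z (a t1) + c2 * hinner z (a t2)).
  { intros z. unfold y. rewrite hinner_add_r, !hinner_scal_r. ring. }
  assert (Hres_comb : forall M r, (forall x, In x M -> x = a t1 \/ x = a t2) ->
     is_residual y M r -> exists al be, comb (a t1) (a t2) r al be).
  { intros M r HM [[v [Hv ->]] _]. destruct (span_comb H _ _ M v Hv HM) as [al [be Hc]].
    exists (c1 - al), (c2 - be). intros z. rewrite hinner_sub_r, Hy, Hc. ring. }
  assert (Hz0 : forall x, x <> 0 -> ~ Rabs x <= Rabs 0).
  { intros x Hx Hle. rewrite Rabs_R0 in Hle. pose proof (Rabs_pos_lt x Hx). lra. }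
  assert (Hshape : forall L, omp_path a y L -> L = nil \/ L = t1 :: nil \/ L = t2 :: nil \/
            L = t1 :: t2 :: nil \/ L = t2 :: t1 :: nil).
  { intros L0 HP. induction HP as [|L0 r t HP IH Hres0 Hr0 Harg].
    - left; auto.
    - assert (HM : forall x, In x (map a L0) -> x = a t1 \/ x = a t2).
      { intros x Hx. apply in_map_iff in Hx. destruct Hx as [t' [<- Ht']].
        destruct IH as [->|[->|[->|[->| ->]]]]; simpl in Ht'; intuition (subst; auto). }
      destruct (Hres_comb _ _ HM Hres0) as [al [be Hc]].
      pose proof (Cmp r al be t Hc Hr0 Harg) as Ht.
      destruct Hres0 as [_ Horth].
      destruct IH as [->|[->|[->|[->| ->]]]].
      + destruct Ht as [->| ->]; simpl; auto.
      + assert (O1 : hinner (a t1) r = 0) by (apply Horth; simpl; auto).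
        destruct Ht as [->| ->].
        * exfalso. pose proof (Harg t2) as A. rewrite O1 in A.
          destruct (Req_dec (hinner (a t2) r) 0) as [O2|O2].
          -- apply Hr0. apply (comb_zero H _ _ r al be Hc); auto.
          -- apply (Hz0 _ O2 A).
        * simpl. auto.
      + assert (O2 : hinner (a t2) r = 0) by (apply Horth; simpl; auto).
        destruct Ht as [->| ->].
        * simpl. auto.
        * exfalso. pose proof (Harg t1) as A. rewrite O2 in A.
          destruct (Req_dec (hinner (a t1) r) 0) as [O1|O1].
          -- apply Hr0. apply (comb_zero H _ _ r al be Hc); auto.
          -- apply (Hz0 _ O1 A).
      + exfalso. apply Hr0. apply (comb_zero H _ _ r al be Hc); apply Horth; simpl; auto.
      + exfalso. apply Hr0. apply (comb_zero H _ _ r al be Hc); apply Horth; simpl; auto. }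
  assert (Hg2 : 0 < 1 - g * g) by nra.
  destruct Hres as [[v [Hv Hv0]] _].
  assert (Hyv : forall z, hinner z y = hinner z v).
  { intros z. pose proof (hinner_sub_r H z y v) as E. rewrite <- Hv0, hinner_zero_r in E. lra. }
  destruct (Hshape L Hpath) as [->|[->|[->|[->| ->]]]]; simpl in Hv.
  - exfalso. apply span0 in Hv. subst v.
    pose proof (Hyv (a t1)) as E1. pose proof (Hyv (a t2)) as E2.
    rewrite Hy, hinner_zero_r, H11, H12g in E1. rewrite Hy, hinner_zero_r, H21g, H22 in E2.
    apply Hc1. assert (c1 * (1 - g * g) = 0) by nra.
    apply Rmult_integral in H1. destruct H1; auto; lra.
  - exfalso. destruct (span1 H _ _ Hv) as [c Hcv].
    pose proof (Hyv (a t1)) as E1. pose proof (Hyv (a t2)) as E2.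
    rewrite Hy, Hcv, H11, H12g in E1. rewrite Hy, Hcv, H21g, H22 in E2.
    apply Hc2. assert (c2 * (1 - g * g) = 0) by nra.
    apply Rmult_integral in H1. destruct H1; auto; lra.
  - exfalso. destruct (span1 H _ _ Hv) as [c Hcv].
    pose proof (Hyv (a t1)) as E1. pose proof (Hyv (a t2)) as E2.
    rewrite Hy, Hcv, H11, H12g in E1. rewrite Hy, Hcv, H21g, H22 in E2.
    apply Hc1. assert (c1 * (1 - g * g) = 0) by nra.
    apply Rmult_integral in H1. destruct H1; auto; lra.
  - intros t. simpl. intuition.
  - intros t. simpl. intuition.
Qed.
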